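(* Let $(G_n)$ be a sequence of graphs with $\min_{v\in V}\delta_v=\omega(\log n)$, let $k\ge3$ be odd and $p_k^\star<p\le1$, and run the $(k,p,\mathcal B)$-Edge-Majority dynamics from the configuration in which every node is $\mathcal R$. Then there exists a constant $T=T(p,k)$ such that $\Pr(\tau\le T)=1-o(1)$.
   Context: $G_n=(V,E)$, $V=\{1,\dots,n\}$, $N(u)$ neighbourhood, $\delta_u=|N(u)|$, $\mathrm{vol}(S)=\sum_{v\in S}\delta_v$; asymptotics as $n\to\infty$. States in $\{\mathcal R,\mathcal B\}$; $B^{(t)}$ is the set of $\mathcal B$ nodes at round $t$, and $\tau=\inf\{t\ge0:\mathrm{vol}(B^{(t)})/\mathrm{vol}(V)>1/2\}$. $(k,p,\mathcal B)$-Edge-Majority: in each round $t\ge1$ every node $u$ independently samples $k$ neighbours uniformly with replacement; for each sampled $v$, independently, $u$ sees $v$ as $\mathcal B$ with probability $p$ and otherwise sees $v$'s true state at round $t-1$; $u$ adopts the state seen more often. $F_{p,k}(x)=\Pr[\mathrm{Bin}(k,(1-p)x)\ge(k+1)/2]$. $p_k^\star\in[1/9,1/2)$ is the (unique) value such that for $0\le p<p_k^\star$, $F_{p,k}(x)=x$ on $[0,1]$ has exactly three solutions, for $p=p_k^\star$ exactly two, and for $p>p_k^\star$ only $0$. *)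

(* Defs.v *)
From mathcomp Require Import all_boot all_order all_algebra.
From mathcomp Require Import all_classical all_reals all_analysis.
Set Implicit Arguments. Unset Strict Implicit. Unset Printing Implicit Defensive.
Import Order.TTheory GRing.Theory Num.Theory.
Local Open Scope ring_scope.


Section EdgeMajority.
Variable R : realType.

Definition simple_graph (n : nat) (G : rel 'I_n) : Prop :=
  (forall u v, G u v = G v u) /\ (forall u, ~~ G u u).

Definition nbhd n (G : rel 'I_n) (u : 'I_n) : {set 'I_n} := [set v | G u v].
Definition deg n (G : rel 'I_n) (u : 'I_n) : nat := #|nbhd G u|.
Definition vol n (G : rel 'I_n) (S : {set 'I_n}) : nat := \sum_(v in S) deg G v.

(* Configurations: the set B of nodes in state B (all others are in state R). *)

(* Written literally:
   a sample outcome s assigns to each of the k samples i a neighbour (s i).1,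
   chosen uniformly in N(u), and a coin (s i).2 which is true (u sees B regardless)
   with probability p; otherwise u sees the true state of (s i).1.  u adopts B iff
   B is seen at least (k+1)/2 times (k odd: strict majority). *)
Definition adoptB_prob (k : nat) (p : R) n (G : rel 'I_n) (B : {set 'I_n})
    (u : 'I_n) : R :=
  \sum_(s : {ffun 'I_k -> 'I_n * bool})
     (\prod_(i < k) ((G u (s i).1)%:R / (deg G u)%:R *
                      (if (s i).2 then p else 1 - p)))
     * ((k.+1)./2 <= #|[set i | (s i).2 || ((s i).1 \in B)]|)%N%:R.

Definition trans (k : nat) (p : R) n (G : rel 'I_n) (B B' : {set 'I_n}) : R :=
  \prod_(u : 'I_n) (if u \in B' then adoptB_prob k p G B u
                    else 1 - adoptB_prob k p G B u).

Definition majB n (G : rel 'I_n) (B : {set 'I_n}) : bool :=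
  (vol G B)%:R / (vol G [set: 'I_n])%:R > (2%:R : R)^-1.

(* Pr(tau <= T) for the dynamics started from the all-R configuration B^(0) = set0:
   sum over trajectories (B^(0),...,B^(T)) of their probability times the
   indicator that vol(B^(t))/vol(V) > 1/2 for some t <= T. *)
Definition prob_tau_le (k : nat) (p : R) n (G : rel 'I_n) (T : nat) : R :=
  \sum_(path : {ffun 'I_T.+1 -> {set 'I_n}})
     ((path ord0 == finset.set0)%:R *
      (\prod_(t < T) trans k p G (path (inord t)) (path (inord t.+1))) *
      ([exists t, majB G (path t)])%:R).

Definition Fpk (p : R) (k : nat) (x : R) : R :=
  \sum_(j < k.+1 | ((k.+1)./2 <= j)%N)
     'C(k, j)%:R * ((1 - p) * x) ^+ j * (1 - (1 - p) * x) ^+ (k - j).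

(* p_k^*: by the context, for p in [0,1], F_{p,k}(x)=x has only the solution 0
   on [0,1] exactly when p > p_k^*; hence p_k^* is the infimum of that set. *)
Definition pstar (k : nat) : R :=
  inf (fun p : R => 0 <= p <= 1 /\
        forall x : R, 0 <= x <= 1 -> Fpk p k x = x -> x = 0).

End EdgeMajority.

(* Main.v *)
Require Import Defs.
From mathcomp Require Import all_boot all_order all_algebra.
From mathcomp Require Import all_classical all_reals all_analysis.
From mathcomp Require Import ring lra zify.
Import Order.TTheory GRing.Theory Num.Theory numFieldNormedType.Exports.
Set Implicit Arguments. Unset Strict Implicit. Unset Printing Implicit Defensive.
Local Open Scope ring_scope.


Section Comb.
Variable R : realType.

Definition fext (X : finType) k (g : {ffun 'I_k -> X}) (x : X) : {ffun 'I_k.+1 -> X} :=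
  [ffun i => if unlift ord_max i is Some j then g j else x].

Lemma widen_lift k (j : 'I_k) : widen_ord (leqnSn k) j = lift ord_max j.
Proof. by apply: val_inj; rewrite /= /bump leqNgt ltn_ord. Qed.

Lemma fext_widen (X : finType) k (g : {ffun 'I_k -> X}) x j :
  fext g x (widen_ord (leqnSn k) j) = g j.
Proof. by rewrite ffunE widen_lift liftK. Qed.

Lemma fext_max (X : finType) k (g : {ffun 'I_k -> X}) x : fext g x ord_max = x.
Proof. by rewrite ffunE unlift_none. Qed.

Lemma fext_inord (X : finType) k (g : {ffun 'I_k.+1 -> X}) x t :
  (t <= k)%N -> fext g x (inord t) = g (inord t).
Proof.
move=> tk.
have -> : (inord t : 'I_k.+2) = widen_ord (leqnSn k.+1) (inord t).
  by apply: val_inj; rewrite /= !inordK // ltnS // ltnW.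
by rewrite fext_widen.
Qed.

Lemma fext_inordmax (X : finType) k (g : {ffun 'I_k -> X}) x :
  fext g x (inord k) = x.
Proof.
have -> : (inord k : 'I_k.+1) = ord_max by apply: val_inj; rewrite /= inordK.
exact: fext_max.
Qed.

Lemma sum_fext (X : finType) k (F : {ffun 'I_k.+1 -> X} -> R) :
  \sum_f F f = \sum_(g : {ffun 'I_k -> X}) \sum_(x : X) F (fext g x).
Proof.
rewrite pair_bigA /=.
rewrite (reindex (fun pr : {ffun 'I_k -> X} * X => fext pr.1 pr.2)) //=.
exists (fun f : {ffun 'I_k.+1 -> X} => ([ffun j => f (widen_ord (leqnSn k) j)], f ord_max)).
  move=> [g x] _ /=; congr (_, _); last exact: fext_max.
  by apply/ffunP => j; rewrite ffunE fext_widen.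
move=> f _ /=; apply/ffunP => i; rewrite ffunE.
case: unliftP => [j ->|->] //.
by rewrite ffunE widen_lift.
Qed.

Lemma sum_prod_sets n (F G : 'I_n -> R) :
  \sum_(J : {set 'I_n}) \prod_i (if i \in J then F i else G i) =
  \prod_i (F i + G i).
Proof.
have := @bigA_distr R 0 1 (@GRing.mul R) (@GRing.add R) _ F G.
by move=> ->; apply: eq_bigl => J. Qed.

Lemma card_fext (X : finType) (P : pred X) k (g : {ffun 'I_k -> X}) x :
  #|[set i | P (fext g x i)]| = (#|[set i | P (g i)]| + P x)%N.
Proof.
rewrite -!sum1dep_card big_mkcond [in RHS]big_mkcond big_ord_recr /=.
rewrite fext_max.
under eq_bigr => j _ do rewrite fext_widen.
by case: (P x).
Qed.

Fixpoint Hrec (k m : nat) (y : R) : R :=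
  match k with
  | 0 => (m == 0)%:R
  | k'.+1 => y * Hrec k' m.-1 y + (1 - y) * Hrec k' m y
  end.

Lemma Hrec0m k y : Hrec k 0 y = 1.
Proof. by elim: k => [|k IH] //=; rewrite IH; ring. Qed.

Lemma Hrec_y0 k m : Hrec k m 0 = (m == 0)%:R.
Proof. by elim: k => [|k IH] //=; rewrite IH; ring. Qed.

Lemma Hrec_bound k m y : 0 <= y <= 1 -> 0 <= Hrec k m y <= 1.
Proof.
move=> /andP[y0 y1]; elim: k m => [|k IH] m /=.
  by case: (m == 0); rewrite ?lexx ?ler01.
have [/andP[a0 a1] /andP[b0 b1]] := (IH m.-1, IH m).
apply/andP; split; first by rewrite addr_ge0 // mulr_ge0 // subr_ge0.
by nra.
Qed.

Lemma Hrec_anti k m y : 0 <= y <= 1 -> Hrec k m.+1 y <= Hrec k m y.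
Proof.
move=> /andP[y0 y1]; elim: k m => [|k IH] m /=.
  by case: (m == 0); rewrite ?lexx ?ler01.
have h1 : Hrec k m y <= Hrec k m.-1 y by case: m => [|m] //=; rewrite IH.
have h2 := IH m.
by nra.
Qed.

Lemma Hrec_mono k m y y' : 0 <= y -> y <= y' -> y' <= 1 ->
  Hrec k m y <= Hrec k m y'.
Proof.
move=> y0 yy y1; elim: k m => [|k IH] m /=; first by [].
have a1 := IH m.-1; have a2 := IH m.
have b : Hrec k m y <= Hrec k m.-1 y.
  by case: m {a1 a2} => [|m] //=; rewrite Hrec_anti // y0 /= (le_trans yy).
have /andP[c0 c1] : 0 <= Hrec k m y <= 1 by rewrite Hrec_bound // y0 (le_trans yy).
have /andP[d0 d1] : 0 <= Hrec k m.-1 y' <= 1 by rewrite Hrec_bound // y1 (le_trans y0).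
have /andP[e0 e1] : 0 <= Hrec k m y' <= 1 by rewrite Hrec_bound // y1 (le_trans y0).
by nra.
Qed.

Lemma Hrec_cont k m : continuous (fun y : R => Hrec k m y).
Proof.
elim: k m => [|k IH] m /=; first by move=> y; exact: cst_continuous.
move=> y.
change ({for y, continuous ((((fun z : R => z) \* (fun z : R => Hrec k m.-1 z)) : R -> R)
   + ((fun z : R => 1 - z) \* (fun z : R => Hrec k m z)))}).
apply: continuousD; apply: continuousM.
- exact: cvg_id.
- exact: (IH m.-1).
- change ({for y, continuous ((fun=> (1:R)) - (fun z : R => z))}).
  apply: continuousB; [exact: cst_continuous|exact: cvg_id].
- exact: (IH m).
Qed.

End Comb.


Section S2.
Variable R : realType.

Lemma card_sumR (T : finType) (Q : pred T) :
  (#|[set v | Q v]|%:R : R) = \sum_v (Q v)%:R.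
Proof.
rewrite -sum1dep_card natr_sum big_mkcond /=.
by apply: eq_bigr => v _; case: (Q v).
Qed.

Lemma leq_add_bool m c (b : bool) :
  ((m <= c + b)%N%:R : R) = b%:R * (m.-1 <= c)%N%:R + (1 - b%:R) * (m <= c)%N%:R.
Proof.
case: b => /=; rewrite ?addn0 ?addn1; last by rewrite mul0r add0r subr0 mul1r.
rewrite mul1r subrr mul0r addr0; by case: m.
Qed.

Lemma Slemma (X : finType) (w : X -> R) (P : pred X) (y : R) k m :
  \sum_x w x = 1 -> \sum_x w x * (P x)%:R = y ->
  \sum_(s : {ffun 'I_k -> X})
     (\prod_(i < k) w (s i)) * (m <= #|[set i | P (s i)]|)%N%:R = Hrec k m y.
Proof.
move=> w1 wy; elim: k m => [|k IH] m.
  rewrite (eq_bigr (fun _ => ((m == 0)%N%:R : R))); last first.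
    move=> s _; rewrite big_ord0 mul1r.
    have -> : #|[set i | P (s i)]| = 0%N.
      by apply/eqP; rewrite -leqn0; have := max_card [set i | P (s i)]; rewrite card_ord.
    by rewrite leqn0.
  by rewrite sumr_const card_ffun card_ord expn0 /=.
rewrite sum_fext.
transitivity (\sum_(g : {ffun 'I_k -> X}) ((\prod_(i<k) w (g i)) *
   (y * (m.-1 <= #|[set i | P (g i)]|)%N%:R + (1 - y) * (m <= #|[set i | P (g i)]|)%N%:R))).
  apply: eq_bigr => g _.
  have E : forall x, \prod_(i < k.+1) w (fext g x i) = \prod_(i<k) w (g i) * w x.
    move=> x; rewrite big_ord_recr /= fext_max; congr (_ * _).
    by apply: eq_bigr => i _; rewrite fext_widen.
  under eq_bigr => x _ do rewrite E card_fext -mulrA.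
  rewrite -big_distrr /=; congr (_ * _).
  under eq_bigr => x _ do rewrite leq_add_bool.
  set A := ((m.-1 <= _)%N%:R). set B := ((m <= _)%N%:R).
  have -> : \sum_x w x * ((P x)%:R * A + (1 - (P x)%:R) * B) =
     (\sum_x w x * (P x)%:R) * A + (\sum_x w x) * B - (\sum_x w x * (P x)%:R) * B.
    transitivity (\sum_x ((w x * (P x)%:R) * A + w x * B - (w x * (P x)%:R) * B)).
      by apply: eq_bigr => x _; ring.
    by rewrite sumrB big_split /= -!mulr_suml.
  by rewrite wy w1; ring.
rewrite /=.
set A := (fun g : {ffun 'I_k -> X} => (\prod_(i<k) w (g i)) * (m.-1 <= #|[set i | P (g i)]|)%N%:R).
set B := (fun g : {ffun 'I_k -> X} => (\prod_(i<k) w (g i)) * (m <= #|[set i | P (g i)]|)%N%:R).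
have -> : \sum_(g : {ffun 'I_k -> X}) ((\prod_(i<k) w (g i)) *
   (y * (m.-1 <= #|[set i | P (g i)]|)%N%:R + (1 - y) * (m <= #|[set i | P (g i)]|)%N%:R))
   = y * \sum_g A g + (1 - y) * \sum_g B g.
  transitivity (\sum_g (y * A g + (1 - y) * B g)).
    by apply: eq_bigr => g _; rewrite /A /B; ring.
  by rewrite big_split /= -!big_distrr.
by rewrite /A /B !IH.
Qed.

Definition Bt (y : R) k j : R := 'C(k, j)%:R * y ^+ j * (1 - y) ^+ (k - j).
Definition Tm k m (y : R) : R := \sum_(j < k.+1) (if (m <= j)%N then Bt y k j else 0).

Lemma Bt_big y k j : (k < j)%N -> Bt y k j = 0.
Proof. by move=> kj; rewrite /Bt bin_small // mul0r mul0r. Qed.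

Lemma Bt_rec y k j : Bt y k.+1 j.+1 = y * Bt y k j + (1 - y) * Bt y k j.+1.
Proof.
rewrite /Bt binS natrD.
case: (ltnP k j.+1) => kj.
  rewrite (bin_small kj) !mul0r add0r mulr0 addr0 subSS exprS; ring.
rewrite subSS.
have -> : (k - j)%N = (k - j.+1).+1 by rewrite subnSK.
rewrite !exprS; ring.
Qed.

Lemma Bt_0 y k : Bt y k.+1 0 = (1 - y) * Bt y k 0.
Proof. by rewrite /Bt !bin0 !expr0 !subn0 exprS; ring. Qed.

Lemma Tm_Hrec k m y : Tm k m y = Hrec k m y.
Proof.
elim: k m => [|k IH] m.
  rewrite /Tm big_ord_recl big_ord0 addr0 /= /Bt bin0 !expr0 !mulr1 leqn0.
  by case: (m == 0).
rewrite /= -!IH /Tm big_ord_recl.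
under eq_bigr => j _ do rewrite /= /bump /= add1n Bt_rec.
rewrite Bt_0.
have E1 : \sum_(j < k.+1) (if (m <= j.+1)%N then y * Bt y k j + (1 - y) * Bt y k j.+1 else 0)
   = y * \sum_(j < k.+1) (if (m.-1 <= j)%N then Bt y k j else 0) +
     (1 - y) * \sum_(j < k.+1) (if (m <= j.+1)%N then Bt y k j.+1 else 0).
  rewrite !big_distrr -big_split; apply: eq_bigr => j _ /=.
  have -> : (m <= j.+1)%N = (m.-1 <= j)%N by case: m.
  by case: ifP => _; ring.
rewrite E1.
have E2 : (if (m <= 0)%N then Bt y k 0 else 0) +
   \sum_(j < k.+1) (if (m <= j.+1)%N then Bt y k j.+1 else 0) =
   \sum_(j < k.+1) (if (m <= j)%N then Bt y k j else 0).
  rewrite [in RHS]big_ord_recl /=; congr (_ + _).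
  rewrite big_ord_recr /= [X in _ + X](_ : _ = 0) ?addr0; last first.
    by rewrite Bt_big ?if_same // ltnSn.
  by apply: eq_bigr => j _; rewrite /= /bump /= add1n.
rewrite -E2 mulrDr.
have -> : (if (m <= ord0)%N then (1 - y) * Bt y k 0 else 0) =
   (1 - y) * (if (m <= 0)%N then Bt y k 0 else 0) by case: ifP; rewrite ?mulr0.
rewrite addrA [_ + y * _]addrC -addrA. done.
Qed.

Lemma Fpk_Hrec (p : R) k x : Fpk p k x = Hrec k (k.+1)./2 ((1 - p) * x).
Proof.
rewrite -Tm_Hrec /Fpk /Tm big_mkcond /=.
by apply: eq_bigr.
Qed.

End S2.


Section S3.
Variable R : realType.

Lemma half_odd k : odd k -> ((k.+1)./2 = (k./2).+1 /\ k = (k./2 + k./2).+1)%N.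
Proof.
move=> ok.
have kh : k = (k./2).*2.+1 by rewrite -{1}(odd_double_half k) ok add1n.
split; last by rewrite {1}kh -addnn.
by rewrite {1}kh -doubleS doubleK.
Qed.

Lemma adoptB_eq (k : nat) (p : R) n (G : rel 'I_n) B u : odd k -> (0 < deg G u)%N ->
  adoptB_prob k p G B u =
  1 - Hrec k (k.+1)./2 ((1 - p) * (#|nbhd G u :\: B|%:R / (deg G u)%:R)).
Proof.
move=> ok dpos.
set d : R := (deg G u)%:R.
have d0 : d != 0 by rewrite pnatr_eq0 -lt0n.
set w := fun s : 'I_n * bool => (G u s.1)%:R / d * (if s.2 then p else 1 - p).
have sumG : \sum_v (G u v)%:R = d by rewrite /d /deg /nbhd card_sumR.
have w1 : \sum_s w s = 1.
  transitivity (\sum_s w (s.1, s.2)); first by apply: eq_bigr => -[].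
  rewrite -(pair_bigA _ (fun v b => w (v, b))) /=.
  under eq_bigr => v _ do rewrite big_bool /= /w /= -mulrDr.
  rewrite -mulr_suml -mulr_suml sumG divff //; ring.
have wy : \sum_s w s * (~~ (s.2 || (s.1 \in B)))%:R =
          (1 - p) * (#|nbhd G u :\: B|%:R / d).
  transitivity (\sum_s w (s.1, s.2) * (~~ (s.2 || (s.1 \in B)))%:R);
    first by apply: eq_bigr => -[].
  rewrite -(pair_bigA _ (fun v b => w (v, b) * (~~ (b || (v \in B)))%:R)) /=.
  under eq_bigr => v _ do rewrite big_bool /= mulr0 add0r /w /=.
  have -> : nbhd G u :\: B = [set v | G u v && (v \notin B)].
    by apply/setP => v; rewrite !inE andbC.
  rewrite card_sumR mulr_suml mulr_sumr; apply: eq_bigr => v _.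
  by case: (G u v); case: (v \in B) => /=; ring.
set m := (k.+1)./2.
have tot : \sum_(s : {ffun 'I_k -> 'I_n * bool}) \prod_(i < k) w (s i) = 1.
  have h := @Slemma R _ w predT 1 k 0 w1.
  rewrite Hrec0m in h.
  transitivity (\sum_(s : {ffun 'I_k -> 'I_n * bool}) \prod_(i<k) w (s i) * (0 <= #|[set i | predT (s i)]|)%N%:R).
    by apply: eq_bigr => s _; rewrite mulr1.
  by apply: h; under eq_bigr => x _ do rewrite mulr1.
rewrite -(Slemma k m w1 wy).
set X := \sum_s _.
suff -> : X = 1 - adoptB_prob k p G B u by ring.
rewrite /X /adoptB_prob -/d.
rewrite -[X in X - _]tot -sumrB; apply: eq_bigr => s _.
rewrite -[X in X - _]mulr1 -mulrBr; congr (_ * _).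
set P := fun x : 'I_n * bool => x.2 || (x.1 \in B).
have cC : (#|[set i | P (s i)]| + #|[set i | ~~ P (s i)]|)%N = k.
  have -> : [set i | ~~ P (s i)] = ~: [set i | P (s i)] by apply/setP => i; rewrite !inE.
  by rewrite cardsC card_ord.
have [hm hk] := half_odd ok.
rewrite /P in cC *.
move: cC; rewrite -/m.
set a := #|[set i | (s i).2 || _]|.
set b := #|[set i | ~~ _]| => cC.
have -> : (m <= b)%N = ~~ (m <= a)%N.
  rewrite /m hm; move: hk cC; move: (k./2) => h hk cC.
  case: (leqP h.+1 a) => ha /=; apply/negbTE || apply/idP; lia.
by case: (m <= a)%N; rewrite /= ?subrr ?subr0.
Qed.

End S3.


Section S4.
Variable R : realType.

Definition ind (b : bool) : R := b%:R.

Definition prodm n (q : 'I_n -> R) (y : {set 'I_n}) : R :=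
  \prod_u (if u \in y then q u else 1 - q u).

Lemma card_sumR' (T : finType) (A : {set T}) :
  (#|A|%:R : R) = \sum_u (u \in A)%:R.
Proof.
rewrite -sum1_card natr_sum big_mkcond /=.
by apply: eq_bigr => v _; case: (v \in A).
Qed.

Lemma prodm_ge0 n (q : 'I_n -> R) y : (forall u, 0 <= q u <= 1) -> 0 <= prodm q y.
Proof.
move=> hq; apply: prodr_ge0 => u _; have /andP[h0 h1] := hq u.
by case: (u \in y); rewrite // subr_ge0.
Qed.

Lemma prodm_sum n (q : 'I_n -> R) : \sum_y prodm q y = 1.
Proof.
rewrite /prodm sum_prod_sets.
by rewrite (eq_bigr (fun _ => 1)) ?prodr_const ?expr1n // => u _; rewrite addrC subrK.
Qed.

Lemma expR_small (l : R) : 0 <= l <= 1/2 -> expR l <= 1 + l + 2 * l ^+ 2.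
Proof.
move=> /andP[l0 l1].
have h1 : 1 - l <= expR (- l) := expR_ge1Dx (- l).
have h2 : expR l * expR (- l) = 1 by rewrite -expRD subrr expR0.
have e0 : 0 < expR l := expR_gt0 l.
have h3 : expR l * (1 - l) <= 1 by rewrite -[X in _ <= X]h2 ler_wpM2l // ltW.
nra.
Qed.

Lemma chernoffB n (q : 'I_n -> R) (N : {set 'I_n}) (mu a dl : R) :
  (forall u, 0 <= q u <= 1) -> 0 <= mu <= 1 -> 0 < dl <= 1 ->
  (forall u, u \in N -> 1 - q u <= mu) -> mu + dl <= a ->
  \sum_y prodm q y * ind (a * #|N|%:R < #|N :\: y|%:R) <=
  expR (- (dl ^+ 2 / 8) * #|N|%:R).
Proof.
move=> hq /andP[mu0 mu1] /andP[dl0 dl1] hN ha.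
set l := dl / 4.
have l0 : 0 <= l by rewrite /l divr_ge0 // ltW.
set d : R := #|N|%:R.
have d0 : 0 <= d by rewrite /d ler0n.
set c := fun u => if u \in N then expR l else 1.
have step1 : forall y, prodm q y * ind (a * d < #|N :\: y|%:R) <=
    prodm q y * (expR (- (l * a * d)) * \prod_u (if u \in y then 1 else c u)).
  move=> y.
  have -> : expR (- (l * a * d)) * \prod_u (if u \in y then 1 else c u) =
            expR (l * (#|N :\: y|%:R - a * d)).
    rewrite mulrBr addrC expRD mulrA; congr (_ * _).
    rewrite card_sumR' mulr_sumr expR_sum; apply: eq_bigr => u _.
    rewrite /c inE; case: (u \in y) => /=; first by rewrite mulr0 expR0.
    by case: (u \in N); rewrite ?mulr1 ?mulr0 ?expR0.
  apply: ler_wpM2l; first exact: prodm_ge0.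
  case: ltrP => h /=; last by rewrite /ind /= expR_ge0.
  have : 0 <= l * (#|N :\: y|%:R - a * d) by rewrite mulr_ge0 // subr_ge0 ltW.
  move=> hh; rewrite /ind /=; apply: le_trans (expR_ge1Dx _); lra.
apply: le_trans (ler_sum _ (fun y _ => step1 y)) _.
under eq_bigr => y _ do rewrite mulrCA.
rewrite -big_distrr /=.
have -> : \sum_y prodm q y * \prod_u (if u \in y then 1 else c u) =
          \prod_u (q u + (1 - q u) * c u).
  rewrite -sum_prod_sets; apply: eq_bigr => y _.
  rewrite /prodm -big_split /=; apply: eq_bigr => u _.
  by case: (u \in y); rewrite ?mulr1.
have el := expR_small (l := l).
have el' : expR l <= 1 + l + 2 * l ^+ 2 by apply: el; rewrite l0 /l; lra.
have e1 : 1 <= expR l by apply: le_trans (expR_ge1Dx _); lra.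
have step4 : \prod_u (q u + (1 - q u) * c u) <= expR (d * (mu * (expR l - 1))).
  rewrite (bigID (fun u => u \in N)) /=.
  rewrite [X in _ * X]big1 ?mulr1; last first.
    by move=> u /negbTE uN; rewrite /c uN mulr1 addrC subrK.
  rewrite /d expRM_natl -prodr_const.
  apply: ler_prod => u uN; rewrite /c uN.
  have /andP[q0 q1] := hq u; have hu := hN u uN.
  apply/andP; split; first by rewrite addr_ge0 // mulr_ge0 // ?subr_ge0 // expR_ge0.
  apply: le_trans (expR_ge1Dx _); nra.
apply: le_trans (ler_wpM2l (expR_ge0 _) step4) _.
rewrite -expRD ler_expR.
have key : mu * (expR l - 1) - l * a <= - (dl ^+ 2 / 8).
  have : mu * (expR l - 1) <= mu * (l + 2 * l ^+ 2) by apply: ler_wpM2l => //; lra.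
  rewrite /l; nra.
nra.
Qed.

Lemma union_bad n (q : 'I_n -> R) (Nb : 'I_n -> {set 'I_n}) (thr : 'I_n -> R) :
  (forall u, 0 <= q u <= 1) ->
  \sum_y prodm q y * ind (~~ [forall v, #|Nb v :\: y|%:R <= thr v]) <=
  \sum_v \sum_y prodm q y * ind (thr v < #|Nb v :\: y|%:R).
Proof.
move=> hq; rewrite exchange_big /=; apply: ler_sum => y _.
rewrite -mulr_sumr; apply: ler_wpM2l; first exact: prodm_ge0.
case: forallP => [//|/=]; first by move=> _; apply: sumr_ge0 => v _; rewrite ler0n.
move=> /existsNP [v hv].
rewrite (bigD1 v) //= ltNge; move/negP/negbTE: hv => ->.
by rewrite lerDl; apply: sumr_ge0 => i _; rewrite ler0n.
Qed.

End S4.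


Section S5.
Variable R : realType.
Variable X : finType.
Variable K : X -> X -> R.
Variable x0 : X.

Fixpoint Wf t : X -> R :=
  match t with
  | 0 => fun x => (x == x0)%:R
  | t'.+1 => fun x' => \sum_x Wf t' x * K x x'
  end.

Lemma ord0_inord m : (ord0 : 'I_m.+1) = inord 0.
Proof. by apply: val_inj; rewrite /= inordK. Qed.

Lemma ordmax_inord m : (ord_max : 'I_m.+1) = inord m.
Proof. by apply: val_inj; rewrite /= inordK. Qed.

Lemma path_sum T (h : X -> R) :
  \sum_(path : {ffun 'I_T.+1 -> X})
     ((path ord0 == x0)%:R *
      (\prod_(t < T) K (path (inord t)) (path (inord t.+1))) * h (path ord_max))
  = \sum_x Wf T x * h x.
Proof.
elim: T h => [|T IH] h.
  rewrite sum_fext.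
  have E : (ord0 : 'I_1) = ord_max by apply: val_inj.
  under eq_bigr => g _ do under eq_bigr => x _ do rewrite E fext_max big_ord0 mulr1.
  by rewrite sumr_const card_ffun card_ord expn0.
rewrite sum_fext.
transitivity (\sum_(g : {ffun 'I_T.+1 -> X}) ((g ord0 == x0)%:R *
      (\prod_(t < T) K (g (inord t)) (g (inord t.+1))) *
      (\sum_x K (g ord_max) x * h x))).
  apply: eq_bigr => g _; rewrite mulr_sumr; apply: eq_bigr => x _.
  rewrite big_ord_recr /=.
  rewrite ord0_inord fext_inord // -ord0_inord.
  rewrite fext_max fext_inordmax fext_inord // -ordmax_inord.
  have -> : \prod_(i < T) K (fext g x (inord (widen_ord (leqnSn T) i)))
       (fext g x (inord (widen_ord (leqnSn T) i).+1)) =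
       \prod_(t < T) K (g (inord t)) (g (inord t.+1)).
    apply: eq_bigr => i _ /=; have hi := ltn_ord i; rewrite fext_inord; last exact: ltnW. by rewrite fext_inord.
  ring.
etransitivity; first exact: (IH (fun y => \sum_x K y x * h x)).
under eq_bigr => y _ do rewrite mulr_sumr.
rewrite exchange_big /=; apply: eq_bigr => x _.
by rewrite mulr_suml; apply: eq_bigr => y _; rewrite mulrA.
Qed.

Hypothesis K0 : forall x y, 0 <= K x y.
Hypothesis K1 : forall x, \sum_y K x y = 1.

Lemma Wf_ge0 t x : 0 <= Wf t x.
Proof.
elim: t x => [|t IH] x /=; first by rewrite ler0n.
by apply: sumr_ge0 => y _; rewrite mulr_ge0.
Qed.

Lemma Wf_sum t : \sum_x Wf t x = 1.
Proof.
elim: t => [|t IH] /=.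
  by rewrite (bigD1 x0) //= eqxx big1 ?addr0 // => x /negbTE ->.
rewrite exchange_big /= -[RHS]IH; apply: eq_bigr => x _.
by rewrite -mulr_sumr K1 mulr1.
Qed.

Lemma Wf_bad (Good : nat -> pred X) (eta : R) :
  0 <= eta ->
  (forall x, Good 0 x) ->
  (forall t x, Good t x -> \sum_y K x y * (~~ Good t.+1 y)%:R <= eta) ->
  forall t, \sum_x Wf t x * (~~ Good t x)%:R <= t%:R * eta.
Proof.
move=> eta0 G0 Gs; elim => [|t IH].
  by rewrite mul0r big1 // => x _; rewrite G0 mulr0.
rewrite /=.
under eq_bigr => y _ do rewrite mulr_suml.
rewrite exchange_big /=.
under eq_bigr => x _ do under eq_bigr => y _ do rewrite -mulrA.
under eq_bigr => x _ do rewrite -mulr_sumr.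
apply: le_trans (_ : \sum_x Wf t x * (eta + (~~ Good t x)%:R) <= _).
  apply: ler_sum => x _; apply: ler_wpM2l; first exact: Wf_ge0.
  case Gx: (Good t x) => /=.
    by rewrite addr0; apply: Gs.
  apply: le_trans (_ : \sum_y K x y <= _); last by rewrite K1 lerDr.
  apply: ler_sum => y _; case: (Good t.+1 y); rewrite /= ?mulr0 ?mulr1 //.
under eq_bigr => x _ do rewrite mulrDr.
rewrite big_split /= -mulr_suml Wf_sum mul1r.
by rewrite -nat1r mulrDl mul1r lerD2l.
Qed.

End S5.


Section S6.
Variable R : realType.

Lemma m_pos k : odd k -> (0 < (k.+1)./2)%N.
Proof. by move=> ok; have [-> _] := half_odd ok. Qed.

Lemma Hrec_scale_cont k m (c : R) :
  continuous (fun z : R => Hrec k m (c * z) - z).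
Proof.
move=> z.
change ({for z, continuous (((fun y : R => Hrec k m y) \o (fun z : R => c * z)) - (fun z : R => z))}).
apply: continuousB; last exact: cvg_id.
apply: continuous_comp; last exact: Hrec_cont.
change ({for z, continuous ((fun=> c) \* (fun z : R => z))}).
apply: continuousM; [exact: cst_continuous|exact: cvg_id].
Qed.

Lemma pstar_key (k : nat) (p : R) : odd k -> pstar R k < p ->
  exists p' : R, [/\ 0 <= p', p' < p &
    forall y, 0 <= y <= 1 -> Hrec k (k.+1)./2 ((1 - p') * y) <= y].
Proof.
move=> ok hp.
set m := (k.+1)./2.
have m0 : (m == 0)%N = false by rewrite /m; have := m_pos ok; case: (_./2).
set S := (fun q : R => 0 <= q <= 1 /\
        forall x : R, 0 <= x <= 1 -> Fpk q k x = x -> x = 0).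
have hS : has_inf S.
  split.
    exists 1; split; first by rewrite ler01 lexx.
    by move=> x _; rewrite Fpk_Hrec subrr mul0r Hrec_y0 -/m m0.
  by exists 0 => q [/andP[q0 _] _].
have e : inf S = pstar R k by [].
have hpos : 0 < p - pstar R k by rewrite subr_gt0.
have [p' [/andP[p'0 p'1] Sp'] lt] := @inf_adherent R S (p - pstar R k) hpos hS.
rewrite e addrC subrK in lt.
exists p'; split => // y /andP[y0 y1].
case: (leP (Hrec k m ((1 - p') * y)) y) => // hlt; exfalso.
have ypos : 0 < y.
  rewrite lt_neqAle y0 andbT; apply/eqP => y0'.
  by move: hlt; rewrite -y0' mulr0 Hrec_y0 m0 ltxx.
set f := fun z : R => Hrec k m ((1 - p') * z) - z.
have fc : continuous f by exact: Hrec_scale_cont.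
have f1 : f 1 <= 0.
  rewrite /f mulr1 subr_le0.
  have hb1 : 0 <= 1 - p' <= 1 by apply/andP; split; lra.
  by case/andP: (Hrec_bound k m hb1).
have fy : 0 < f y by rewrite /f subr_gt0.
have hb : Num.min (f y) (f 1) <= 0 <= Num.max (f y) (f 1).
  by rewrite ge_min le_max f1 orbT (ltW fy).
have [c cI fc0] := IVT (f := f) (v := 0) y1 (continuous_subspaceT fc) hb.
move: cI; rewrite in_itv /= => /andP[cy c1].
have c0 : c = 0.
  apply: Sp'; first by rewrite c1 andbT (le_trans y0).
  by rewrite Fpk_Hrec -/m; apply/eqP; rewrite -subr_eq0; apply/eqP.
by move: ypos; rewrite ltNge (le_trans cy) // c0.
Qed.

Definition athr (dl : R) (t : nat) : R := Num.max (1 - t%:R * dl) (1/2 - dl).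

Lemma thresholds (k : nat) (p p' : R) : odd k -> 0 <= p' -> p' < p -> p <= 1 ->
  (forall y, 0 <= y <= 1 -> Hrec k (k.+1)./2 ((1 - p') * y) <= y) ->
  let F := fun x => Hrec k (k.+1)./2 ((1 - p) * x) in
  let dl := (p - p') / 4 in
  [/\ 0 < dl, dl <= 1/4,
     forall t, 0 <= athr dl t <= 1,
     athr dl 0 = 1 &
     forall t, F (athr dl t) + dl <= athr dl t.+1 ].
Proof.
move=> ok p'0 pp p1 key F dl.
have dl0 : 0 < dl by rewrite /dl; lra.
have dl1 : dl <= 1/4 by rewrite /dl; lra.
have Fb : forall x, 0 <= x <= 1 -> 0 <= F x <= 1.
  move=> x /andP[x0 x1]; apply: Hrec_bound; apply/andP; split; nra.
have Fm : forall x x', 0 <= x -> x <= x' -> x' <= 1 -> F x <= F x'.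
  move=> x x' x0 xx x1; apply: Hrec_mono; nra.
have marg : forall x, 1/2 <= x <= 1 -> F x <= x - 2 * dl.
  move=> x /andP[x0 x1].
  have q0 : 0 < 1 - p' by lra.
  set y := (1 - p) * x / (1 - p').
  have hy : (1 - p') * y = (1 - p) * x by rewrite /y mulrC divfK // gt_eqF.
  have y0 : 0 <= y by rewrite /y divr_ge0 //; nra.
  have yx : y <= x.
    have : (1 - p') * y <= (1 - p') * x by rewrite hy; nra.
    by rewrite ler_pM2l.
  have hk := key y; rewrite hy in hk.
  have hy1 : 0 <= y <= 1 by rewrite y0 /= (le_trans yx).
  have := hk hy1.
  rewrite -/(F x) => hF.
  have : (1 - p') * (x - y) = x * (p - p') by rewrite mulrBr hy; ring.
  rewrite /dl => E; nra.
have ab : forall t, 0 <= athr dl t <= 1.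
  move=> t; rewrite /athr; apply/andP; split.
    by rewrite le_max; apply/orP; right; lra.
  rewrite ge_max; apply/andP; split; last lra.
  have : 0 <= t%:R * dl by rewrite mulr_ge0 ?ler0n // ltW.
  lra.
split => //.
- by rewrite /athr mul0r subr0; apply/max_idPl; lra.
move=> t.
case: (leP (1/2) (athr dl t)) => ha.
  have ea : athr dl t = 1 - t%:R * dl.
    move: ha; rewrite /athr le_max => /orP[h|h]; last lra.
    by apply/max_idPl; lra.
  have hx : 1/2 <= athr dl t <= 1 by rewrite ha; case/andP: (ab t).
  have := marg _ hx.
  rewrite {2}ea => hF.
  rewrite [X in _ <= X]/athr le_max; apply/orP; left.
  rewrite -natr1 mulrDl mul1r; lra.
have [a0 a1] := andP (ab t).
have hF : F (athr dl t) <= F (1/2) by apply: Fm => //; [exact: ltW|lra].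
have hh := marg (1/2).
have h : F (1/2) <= 1/2 - 2 * dl by apply: hh; rewrite lexx /=; lra.
rewrite [X in _ <= X]/athr le_max; apply/orP; right.
lra.
Qed.

End S6.


Section S7.
Variable R : realType.

Lemma cnt_le_deg n (G : rel 'I_n) v B : (#|nbhd G v :\: B| <= deg G v)%N.
Proof. by rewrite /deg subset_leq_card // subsetDl. Qed.

Lemma adopt_bounds (k : nat) (p : R) n (G : rel 'I_n) B u (a : R) :
  odd k -> (0 < deg G u)%N -> 0 <= p <= 1 ->
  0 <= adoptB_prob k p G B u <= 1 /\
  (0 <= a -> a <= 1 -> #|nbhd G u :\: B|%:R <= a * (deg G u)%:R ->
     1 - adoptB_prob k p G B u <= Hrec k (k.+1)./2 ((1 - p) * a)).
Proof.
move=> ok dpos /andP[p0 p1].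
rewrite adoptB_eq //.
set d : R := (deg G u)%:R.
have d0 : 0 < d by rewrite /d ltr0n.
set r := #|nbhd G u :\: B|%:R / d.
have r0 : 0 <= r by rewrite /r divr_ge0 // ?ler0n // ltW.
have r1 : r <= 1 by rewrite /r ler_pdivrMr // mul1r /d ler_nat cnt_le_deg.
have hb : 0 <= (1 - p) * r <= 1 by apply/andP; split; nra.
have [h0 h1] := andP (Hrec_bound k (k.+1)./2 hb).
split; first by apply/andP; split; lra.
move=> a0 a1 ha.
have ra : r <= a by rewrite /r ler_pdivrMr.
rewrite opprB addrC subrK.
apply: Hrec_mono; nra.
Qed.

Lemma onestep (k : nat) (p : R) n (G : rel 'I_n) B (a a' dl : R) :
  odd k -> (forall u, (0 < deg G u)%N) -> 0 <= p <= 1 ->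
  0 <= a <= 1 -> 0 < dl <= 1 ->
  Hrec k (k.+1)./2 ((1 - p) * a) + dl <= a' ->
  (forall v, #|nbhd G v :\: B|%:R <= a * (deg G v)%:R) ->
  \sum_B' trans k p G B B' *
     ind R (~~ [forall v, #|nbhd G v :\: B'|%:R <= a' * (deg G v)%:R]) <=
  \sum_v expR (- (dl ^+ 2 / 8) * (deg G v)%:R).
Proof.
move=> ok dpos hp /andP[a0 a1] hdl ha' Good.
set q := adoptB_prob k p G B.
have hq : forall u, 0 <= q u <= 1 by move=> u; case: (adopt_bounds B a ok (dpos u) hp).
apply: le_trans (union_bad (fun v => nbhd G v) (fun v => a' * (deg G v)%:R) hq) _.
apply: ler_sum => v _.
have hmu : 0 <= Hrec k (k.+1)./2 ((1 - p) * a) <= 1.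
  by apply: Hrec_bound; case/andP: hp => p0 p1; apply/andP; split; nra.
apply: (chernoffB (mu := Hrec k (k.+1)./2 ((1 - p) * a))) => //.
move=> u _; by case: (adopt_bounds B a ok (dpos u) hp) => _; apply.
Qed.

Lemma good_majB n (G : rel 'I_n) B (a : R) :
  simple_graph G -> (0 < n)%N -> (forall u, (0 < deg G u)%N) -> a < 1/2 ->
  (forall v, #|nbhd G v :\: B|%:R <= a * (deg G v)%:R) ->
  majB R G B.
Proof.
move=> [Gs _] n0 dpos ha Good.
set V : R := \sum_v (deg G v)%:R.
have V0 : 0 < V.
  rewrite /V (bigD1 (Ordinal n0)) //=; apply: ltr_pwDl; first by rewrite ltr0n.
  by apply: sumr_ge0 => i _; rewrite ler0n.
have eV : (vol G [set: 'I_n])%:R = V.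
  by rewrite /vol natr_sum; apply: eq_bigl => v; rewrite inE.
have eB : (vol G B)%:R = \sum_v (v \in B)%:R * (deg G v)%:R :> R.
  rewrite /vol natr_sum big_mkcond /=; apply: eq_bigr => v _.
  by case: (v \in B); rewrite ?mul1r ?mul0r.
have eC : \sum_v #|nbhd G v :\: B|%:R = \sum_v (v \notin B)%:R * (deg G v)%:R :> R.
  transitivity (\sum_v \sum_u ((G v u) && (u \notin B))%:R : R).
    apply: eq_bigr => v _; rewrite card_sumR'; apply: eq_bigr => u _.
    by rewrite !inE andbC.
  rewrite exchange_big /=; apply: eq_bigr => u _.
  rewrite /deg /nbhd card_sumR mulr_sumr; apply: eq_bigr => v _.
  by rewrite Gs; case: (G u v); case: (u \in B); rewrite /= ?mul1r ?mul0r.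
have split : V = (vol G B)%:R + \sum_v (v \notin B)%:R * (deg G v)%:R.
  rewrite eB -big_split /=; apply: eq_bigr => v _.
  by case: (v \in B); rewrite /= ?mul1r ?mul0r ?addr0 ?add0r.
have hC : \sum_v #|nbhd G v :\: B|%:R <= a * V :> R.
  by rewrite /V mulr_sumr; apply: ler_sum => v _; apply: Good.
rewrite /majB eV ltr_pdivlMr // -eC in split *.
have e2 : (2%:R^-1 : R) = 1/2 by rewrite mul1r.
have aV : a * V < 1/2 * V by rewrite ltr_pM2r.
rewrite e2; lra.
Qed.

End S7.

Unset Implicit Arguments.


Theorem corollary5p8 (R : realType) (k : nat) (p : R) :
  odd k -> (3 <= k)%N -> pstar R k < p -> p <= 1 ->
  exists T : nat,
    forall G : forall n : nat, rel 'I_n,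
      (forall n, simple_graph (G n)) ->
      (* min degree = omega(log n) *)
      (forall C : R, 0 < C -> exists N : nat, forall n : nat, (N <= n)%N ->
         forall u : 'I_n, C * ln (n%:R : R) <= (deg (G n) u)%:R) ->
      (* Pr(tau <= T) = 1 - o(1) *)
      (forall eps : R, 0 < eps -> exists N : nat, forall n : nat, (N <= n)%N ->
         1 - eps <= prob_tau_le k p (G n) T).
Proof.
move=> ok k3 hp p1.
have [p' [p'0 pp key]] := pstar_key ok hp.
have := thresholds ok p'0 pp p1 key.
rewrite /=.
set dl := (p - p') / 4.
move=> [dl0 dl1 ab a0 astep].
have hp01 : 0 <= p <= 1 by rewrite p1 andbT (le_trans p'0) // ltW.
have [T hT] : exists T : nat, 1 < T%:R * dl.
  exists (Num.bound (dl^-1)).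
  have hi : 0 <= dl^-1 by rewrite invr_ge0 ltW.
  have := archi_boundP hi.
  by rewrite -[X in X < _ -> _]div1r ltr_pdivrMr.
exists T => G hG hdeg eps heps.
set c := dl ^+ 2 / 8.
have c0 : 0 < c by rewrite /c divr_gt0 // exprn_gt0.
have two0 : (0 : R) < 2 by lra.
have [N0 hN0] := hdeg (2 / c) (divr_gt0 two0 c0).
have [Nb hNb] : exists Nb : nat, T%:R / eps < Nb%:R.
  exists (Num.bound (T%:R / eps)); apply: archi_boundP.
  by rewrite divr_ge0 // ?ler0n // ltW.
exists (maxn (maxn N0 2) Nb) => n hn.
have nN0 : (N0 <= n)%N by move: hn; rewrite !geq_max => /andP[/andP[]]. 
have n2 : (2 <= n)%N by move: hn; rewrite !geq_max => /andP[/andP[]]. 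
have nNb : (Nb <= n)%N by move: hn; rewrite !geq_max => /andP[]. 
have n0 : (0 < n)%N by apply: leq_trans n2.
have nR : 1 < (n%:R : R) by rewrite ltr1n.
have lnpos : 0 < ln (n%:R : R) by apply: ln_gt0.
set Gn := G n.
have dge : forall u : 'I_n, 2 / c * ln (n%:R : R) <= (deg Gn u)%:R by apply: hN0.
have dposR : forall u : 'I_n, 0 < ((deg Gn u)%:R : R).
  move=> u; apply: lt_le_trans (dge u); apply: mulr_gt0 => //.
  exact: divr_gt0 two0 c0.
have dpos : forall u : 'I_n, (0 < deg Gn u)%N by move=> u; rewrite -(ltr0n R).
set K := trans k p Gn.
have K0 : forall x y, 0 <= K x y.
  move=> x y; apply: prodm_ge0 => u.
  by case: (adopt_bounds x 0 ok (dpos u) hp01).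
have K1 : forall x, \sum_y K x y = 1 by move=> x; exact: prodm_sum.
set Good := fun t (B : {set 'I_n}) =>
  [forall v, #|nbhd Gn v :\: B|%:R <= athr dl t * (deg Gn v)%:R].
set eta : R := n%:R^-1.
have eta0 : 0 <= eta by rewrite /eta invr_ge0 ler0n.
have G0 : forall B, Good 0 B.
  move=> B; apply/forallP => v; rewrite a0 mul1r ler_nat; exact: cnt_le_deg.
have hdl : 0 < dl <= 1 by rewrite dl0 /=; lra.
have step : forall t B, Good t B -> \sum_y K B y * (~~ Good t.+1 y)%:R <= eta.
  move=> t B /forallP GB.
  apply: le_trans (onestep ok dpos hp01 (ab t) hdl (astep t) GB) _.
  apply: le_trans (_ : \sum_(v : 'I_n) expR (- (2 * ln (n%:R : R))) <= _).
    apply: ler_sum => v _; rewrite ler_expR mulNr lerN2.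
    have := dge v; rewrite -/c => h.
    have : c * (2 / c * ln n%:R) <= c * (deg Gn v)%:R by rewrite ler_pM2l.
    by rewrite mulrA mulrCA divff ?gt_eqF // mulr1 mulrC.
  rewrite sumr_const card_ord expRN expRM_natl lnK; last by rewrite posrE (lt_trans ltr01).
  rewrite /eta -(mulr_natr (n%:R ^- 2)); have nz : (n%:R : R) != 0 by rewrite pnatr_eq0 -lt0n.
  by rewrite expr2 invfM -mulrA mulVf // mulr1.
have hW := Wf_bad finset.set0 K0 K1 eta0 G0 step T.
have aT : athr dl T < 1/2.
  by rewrite /athr gt_max; apply/andP; split; lra.
apply: le_trans (_ : \sum_B Wf K finset.set0 T B * (Good T B)%:R <= _).
  have e : \sum_B Wf K finset.set0 T B * (Good T B)%:R =
           1 - \sum_B Wf K finset.set0 T B * (~~ Good T B)%:R.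
    rewrite -[X in X - _](Wf_sum finset.set0 K1 T) -sumrB; apply: eq_bigr => B _.
    by case: (Good T B); rewrite /= ?mulr1 ?mulr0 ?subr0 ?subrr.
  rewrite e lerD2l lerN2; apply: le_trans hW _.
  have h1 : T%:R / eps < n%:R by apply: (lt_le_trans hNb); rewrite ler_nat.
  rewrite ltr_pdivrMr // in h1.
  rewrite /eta ler_pdivrMr ?ltr0n //.
  by rewrite mulrC; apply: ltW.
apply: le_trans (_ : \sum_B Wf K finset.set0 T B * (majB R Gn B)%:R <= _).
  apply: ler_sum => B _; apply: ler_wpM2l; first exact: Wf_ge0.
  case GT: (Good T B) => /=; last by case: (majB R Gn B); rewrite /= ?ler01 ?lexx.
  rewrite (@good_majB R n Gn B (athr dl T)) //.
  by move=> v; move/forallP: GT => /(_ v).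
rewrite -path_sum /prob_tau_le; apply: ler_sum => path _.
apply: ler_wpM2l.
  rewrite mulr_ge0 ?ler0n //; apply: prodr_ge0 => t _; exact: K0.
case: (majB R Gn (path ord_max)) /idP => hm; last by rewrite ler0n.
have -> : [exists t, majB R Gn (path t)] by apply/existsP; exists ord_max.
by [].
Qed.
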